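(* Fix a scenario $s\in S$. Let $\Pi_s\subseteq\mathbb{R}^{n+1}$ be any neighborhood of the origin and let $\Pi_s^*=\Pi_s\cap(\mathbb{R}^n\times\mathbb{R}_+)$. Define $$\bar P_s:=\Big\{(x,\theta_s)\in\mathbb{R}^n\times\mathbb{R}:\ \lambda^Tx+\theta_s\ge \overline{Q}_s^*(\lambda,1)\ \text{ and }\ \lambda^Tx\ge \phi_s(\lambda)\ \text{ for all }\lambda\in\mathbb{R}^n\Big\}.$$ Then $P_s(\Pi_s^* )=\bar P_s$.
   Context: Two-stage stochastic integer program with finite scenario set $S$ and probabilities $p_s>0$, $\sum_{s\in S}p_s=1$. Data: $c\in\mathbb{R}^n$, matrix $A$ and vector $b$, and for each $s\in S$ matrices $T^s,W^s$ and vectors $h^s,q^s$ (all data rational). $X=\{x\in\mathbb{R}^n: x_j\in\mathbb{Z},\ j\in J_X\}$ and $Y=\{y\in\mathbb{R}^{n_y}: y_j\in\mathbb{Z},\ j\in J_Y\}$ for given index sets $J_X,J_Y$. For each $s$, $K^s:=\{(x,y)\in X\times Y: Ax\ge b,\ T^sx+W^sy\ge h^s\}$, assumed nonempty and bounded. Define $\overline{Q}_s^*:\mathbb{R}^n\times\mathbb{R}_+\to\mathbb{R}$ by $\overline{Q}_s^*(\pi,\pi_0)=\min\{\pi^Tx+\pi_0(q^s)^Ty:(x,y)\in K^s\}$. For $\Pi\subseteq\mathbb{R}^n\times\mathbb{R}_+$, $P_s(\Pi):=\{(x,\theta_s)\in\mathbb{R}^n\times\mathbb{R}:\ \pi^Tx+\pi_0\theta_s\ge\overline{Q}_s^*(\pi,\pi_0)\text{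 for all }(\pi,\pi_0)\in\Pi\}$. For $\lambda\in\mathbb{R}^n$, $\phi_s(\lambda):=\inf\{\mathbb{1}^Tv+\mathbb{1}^Tu+\lambda^Tx:\ Ax+u\ge b,\ T^sx+W^sy+v\ge h^s,\ x\in X,\ y\in Y,\ u\ge0,\ v\ge 0\}\in\mathbb{R}\cup\{-\infty\}$ (the inequality $\lambda^Tx\ge\phi_s(\lambda)$ is the Lagrangian feasibility cut; $\lambda^Tx+\theta_s\ge\overline{Q}_s^*(\lambda,1)$ is the Lagrangian optimality cut). *)

(* Defs.v *)
From HB Require Import structures.
From mathcomp Require Import all_boot all_order all_algebra.
From mathcomp Require Import all_classical all_reals all_analysis.
Set Implicit Arguments. Unset Strict Implicit. Unset Printing Implicit Defensive.
Import Order.TTheory GRing.Theory Num.Theory.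
Import numFieldNormedType.Exports.
Local Open Scope classical_set_scope.
Local Open Scope ring_scope.

Section Defs.
Variable R : realType.

Definition toR (m n : nat) (M : 'M[rat]_(m, n)) : 'M[R]_(m, n) := map_mx (@ratr R) M.

Definition dotv (n : nat) (u v : 'cV[R]_n) : R := \sum_(i < n) u i 0 * v i 0.

Definition sumv (n : nat) (v : 'cV[R]_n) : R := \sum_(i < n) v i 0.

Definition mxge (m n : nat) (u v : 'M[R]_(m, n)) : Prop := forall i j, v i j <= u i j.

Definition intset (n : nat) (J : {set 'I_n}) : set 'cV[R]_n :=
  [set x | forall j, j \in J -> x j 0 \is a Num.int].

Definition Kset (n ny m k : nat) (A : 'M[rat]_(m, n)) (b : 'cV[rat]_m)
  (T : 'M[rat]_(k, n)) (W : 'M[rat]_(k, ny)) (h : 'cV[rat]_k)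
  (JX : {set 'I_n}) (JY : {set 'I_ny}) : set ('cV[R]_n * 'cV[R]_ny) :=
  [set xy | [/\ intset JX xy.1, intset JY xy.2,
              mxge (toR A *m xy.1) (toR b) &
              mxge (toR T *m xy.1 + toR W *m xy.2) (toR h)]].

Definition bounded_pairs (n ny : nat) (K : set ('cV[R]_n * 'cV[R]_ny)) : Prop :=
  exists M : R, forall xy, K xy ->
    (forall i, `|xy.1 i 0| <= M) /\ (forall i, `|xy.2 i 0| <= M).

(* \bar{Q}^*_s(pi, pi0) = min {pi^T x + pi0 q^T y : (x,y) in K^s}
   (written as an infimum in the extended reals; it is attained under the
   standing assumptions) *)
Definition Qstar (n ny : nat) (K : set ('cV[R]_n * 'cV[R]_ny)) (q : 'cV[rat]_ny)
  (pi : 'cV[R]_n) (pi0 : R) : \bar R :=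
  ereal_inf [set ((dotv pi xy.1 + pi0 * dotv (toR q) xy.2)%:E) | xy in K].

Definition phi (n ny m k : nat) (A : 'M[rat]_(m, n)) (b : 'cV[rat]_m)
  (T : 'M[rat]_(k, n)) (W : 'M[rat]_(k, ny)) (h : 'cV[rat]_k)
  (JX : {set 'I_n}) (JY : {set 'I_ny}) (lam : 'cV[R]_n) : \bar R :=
  ereal_inf [set ((sumv z.2 + sumv z.1.2 + dotv lam z.1.1.1)%:E) |
     z in [set z : 'cV[R]_n * 'cV[R]_ny * 'cV[R]_m * 'cV[R]_k |
       [/\ mxge (toR A *m z.1.1.1 + z.1.2) (toR b),
           mxge (toR T *m z.1.1.1 + toR W *m z.1.1.2 + z.2) (toR h),
           intset JX z.1.1.1 /\ intset JY z.1.1.2,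
           mxge z.1.2 0 & mxge z.2 0]]].

Definition Pset (n ny : nat) (K : set ('cV[R]_n * 'cV[R]_ny)) (q : 'cV[rat]_ny)
  (Pi : set ('cV[R]_n * R)) : set ('cV[R]_n * R) :=
  [set xt | forall pp, Pi pp -> pp.2 >= 0 ->
     (Qstar K q pp.1 pp.2 <= (dotv pp.1 xt.1 + pp.2 * xt.2)%:E)%E].

Definition Pbar (n ny m k : nat) (A : 'M[rat]_(m, n)) (b : 'cV[rat]_m)
  (T : 'M[rat]_(k, n)) (W : 'M[rat]_(k, ny)) (h : 'cV[rat]_k) (q : 'cV[rat]_ny)
  (JX : {set 'I_n}) (JY : {set 'I_ny}) : set ('cV[R]_n * R) :=
  [set xt | forall lam : 'cV[R]_n,
     (Qstar (Kset A b T W h JX JY) q lam 1 <= (dotv lam xt.1 + xt.2)%:E)%E /\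
     (phi A b T W h JX JY lam <= (dotv lam xt.1)%:E)%E].

End Defs.

(* Main.v *)
Require Import Defs.
From HB Require Import structures.
From mathcomp Require Import all_boot all_order all_algebra.
From mathcomp Require Import all_classical all_reals all_analysis.
From mathcomp Require Import lra.
Import Order.TTheory GRing.Theory Num.Theory.
Import numFieldNormedType.Exports.
Local Open Scope classical_set_scope.
Local Open Scope ring_scope.

Lemma nbP (R : realType) n (Pi : set ('cV[R]_n * R)) (lam : 'cV[R]_n) (a : R) :
  nbhs ((0 : 'cV[R]_n), (0 : R)) Pi -> exists2 t : R, 0 < t & Pi (t *: lam, t * a).
Proof.
move=> /nbhs_ballP [e /= e0 He].
have h1 : \forall t \near (0:R), ball (0 : 'cV[R]_n) e (t *: lam).
  have := (@cvgZr_tmp _ _ _ (nbhs (0:R)) _ id 0 lam (@cvg_id _ _)).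
  rewrite scale0r => /(_ _) H; apply: H; by apply/nbhs_ballP; exists e.
have h2 : \forall t \near (0:R), ball (0 : R) e (t * a).
  have := (@cvgMr_tmp _ _ (nbhs (0:R)) _ id 0 a (@cvg_id _ _)).
  rewrite mul0r => /(_ _) H; apply: H; by apply/nbhs_ballP; exists e.
have : \forall t \near (0:R), ball (0 : 'cV[R]_n) e (t *: lam) /\ ball (0:R) e (t * a).
  by near=> t; split; near: t.
move=> /nbhs_ballP [d /= d0 Hd].
exists (d/2); first by rewrite divr_gt0.
apply: He. apply: Hd. rewrite /ball /= sub0r normrN ger0_norm ?divr_ge0 ?ltW //.
by rewrite ltr_pdivrMr // ltr_pMr // ltr1n.
Unshelve. all: by end_near. Qed.

Arguments nbP {R n Pi} lam a.

Lemma dotvZ (R : realType) n (t : R) (u v : 'cV[R]_n) :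
  dotv (t *: u) v = t * dotv u v.
Proof.
rewrite /dotv mulr_sumr; apply: eq_bigr => i _; by rewrite mxE mulrA.
Qed.

Section Q.
Variables (R : realType) (n ny : nat) (K : set ('cV[R]_n * 'cV[R]_ny)) (q : 'cV[rat]_ny).

Lemma Qstar_le pi pi0 xy : K xy ->
  (Qstar K q pi pi0 <= (dotv pi xy.1 + pi0 * dotv (toR R q) xy.2)%:E)%E.
Proof. by move=> Kxy; apply: ereal_inf_lbound; exists xy. Qed.

Lemma Qstar_lt pi pi0 (r e : R) : (Qstar K q pi pi0 <= r%:E)%E -> 0 < e ->
  exists2 xy, K xy & dotv pi xy.1 + pi0 * dotv (toR R q) xy.2 < r + e.
Proof.
move=> Hle e0.
have : (Qstar K q pi pi0 < (r + e)%:E)%E.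
  by apply: (le_lt_trans Hle); rewrite lte_fin ltrDl.
move=> /ereal_inf_lt [y [xy Kxy <-]]; rewrite lte_fin => ?.
by exists xy.
Qed.

End Q.
Arguments Qstar_le {R n ny K q} pi pi0 {xy}.
Arguments Qstar_lt {R n ny K q pi pi0 r e}.

Theorem proposition1 (R : realType) (S : finType) (n ny m : nat) (k : S -> nat)
  (p : S -> R) (c : 'cV[rat]_n) (A : 'M[rat]_(m, n)) (b : 'cV[rat]_m)
  (T : forall s, 'M[rat]_(k s, n)) (W : forall s, 'M[rat]_(k s, ny))
  (h : forall s, 'cV[rat]_(k s)) (q : forall s, 'cV[rat]_ny)
  (JX : {set 'I_n}) (JY : {set 'I_ny}) :
  (forall s, 0 < p s) -> \sum_(s : S) p s = 1 ->
  (forall s, Kset (R:=R) A b (T s) (W s) (h s) JX JY !=set0) ->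
  (forall s, bounded_pairs (Kset (R:=R) A b (T s) (W s) (h s) JX JY)) ->
  forall (s : S) (Pi : set ('cV[R]_n * R)),
    nbhs ((0 : 'cV[R]_n), (0 : R)) Pi ->
    Pset (Kset (R:=R) A b (T s) (W s) (h s) JX JY) (q s)
         (Pi `&` [set pp | 0 <= pp.2]) =
    Pbar A b (T s) (W s) (h s) (q s) JX JY.
Proof.
move=> _ _ Kne Kbd s Pi HPi.
set K := Kset _ _ _ _ _ _ _.
rewrite /Pset /Pbar; apply/seteqP; split => [[x th] /= H lam | [x th] /= H [pi pi0] /= [_ Hpi0] _].
- split.
  + have [t t0 Pit] := nbP lam 1 HPi.
    have t1 : 0 <= t * 1 by rewrite mulr1 ltW.
    have H' := H (t *: lam, t * 1) (conj Pit t1) t1.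
    apply/lee_addgt0Pr => e e0.
    have [xy Kxy] := Qstar_lt H' (mulr_gt0 t0 e0).
    rewrite /= !dotvZ => Hlt.
    apply: (le_trans (Qstar_le _ _ Kxy)); rewrite -EFinD lee_fin.
    rewrite mul1r; nra.
  + have [t t0 Pit] := nbP lam 0 HPi.
    have t1 : 0 <= t * 0 by rewrite mulr0.
    have H' := H (t *: lam, t * 0) (conj Pit t1) t1.
    apply/lee_addgt0Pr => e e0.
    have [[x' y'] Kxy] := Qstar_lt H' (mulr_gt0 t0 e0).
    rewrite /= !dotvZ !mulr0 !mul0r !addr0 => Hlt.
    have [K1 K2 K3 K4] := Kxy.
    apply: (@le_trans _ _ ((sumv (0 : 'cV[R]_(k s)) + sumv (0 : 'cV[R]_m) + dotv lam x')%:E)).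
      apply: ereal_inf_lbound; exists (x', y', (0 : 'cV[R]_m), (0 : 'cV[R]_(k s))) => //.
      by split => //=; rewrite ?addr0 // => i j; rewrite mxE.
    have s0 : forall l, sumv (0 : 'cV[R]_l) = 0.
      by move=> l; rewrite /sumv big1 // => i _; rewrite mxE.
    rewrite !s0 !add0r -EFinD lee_fin; nra.
- move: Hpi0; rewrite le_eqVlt => /orP [/eqP <-| pi0_gt0].
  + have [[x0 y0] Kxy0] := Kne s.
    have [M HM] := Kbd s.
    set B := \sum_(i < ny) `|toR R (q s) i 0| * `|M|.
    have B0 : 0 <= B by apply: sumr_ge0 => i _; rewrite mulr_ge0.
    have HB : forall xy, K xy -> `|dotv (toR R (q s)) xy.2| <= B.
      move=> xy /HM [_ H2]; rewrite /dotv.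
      apply: (le_trans (ler_norm_sum _ _ _)); apply: ler_sum => i _.
      rewrite normrM ler_wpM2l //; apply: (le_trans (H2 i)); exact: ler_norm.
    apply/lee_addgt0Pr => e e0.
    set t := (`|th| + 1 + B) / e.
    have t0 : 0 < t by rewrite divr_gt0 //; have := normr_ge0 th; lra.
    have te : t * e = `|th| + 1 + B by rewrite /t mulfVK // gt_eqF.
    have [xy Kxy] := Qstar_lt (H (t *: pi)).1 ltr01.
    rewrite /= !dotvZ mul1r => Hlt.
    have := HB _ Kxy; rewrite ler_norml => /andP [Hb1 Hb2].
    have Hth : th <= `|th| by exact: ler_norm.
    apply: (le_trans (Qstar_le _ _ Kxy)); rewrite -EFinD lee_fin !mul0r !addr0.
    nra.
  + apply/lee_addgt0Pr => e e0.
    have [xy Kxy] := Qstar_lt (H (pi0^-1 *: pi)).1 (divr_gt0 e0 pi0_gt0).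
    rewrite /= !dotvZ mul1r => Hlt.
    apply: (le_trans (Qstar_le _ _ Kxy)); rewrite -EFinD lee_fin /=.
    have u1 : pi0 * pi0^-1 = 1 by rewrite mulfV // gt_eqF.
    move: Hlt; rewrite -(ltr_pM2l pi0_gt0) !mulrDr !mulrA u1 !mul1r.
    rewrite (mulrC pi0 e) -mulrA u1 mulr1 => Hlt; exact: ltW.
Qed.
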